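(* Let $\mu$ be a positive Borel measure on $\mathbb{R}$, absolutely continuous with respect to Lebesgue measure, with finite moments of all orders, supported on a set $E$ with infinitely many points, let $c\in\mathbb{R}\setminus E$ and $N>0$. With the notation of the context, for every $n\ge1$, $$Q_n^{c,N}(x)=Q_n^c(x)-N\,Q_n^{c,N}(c)\,K_{n-1}^c(x,c),\qquad Q_n^{c,N}(c)=\frac{Q_n^c(c)}{1+NK_{n-1}^c(c,c)}=\kappa_n^{-1}Q_n^c(c),$$ where $\kappa_n=1+NB_n^c$.
   Context: $\{P_n\}$ is the monic orthogonal polynomial sequence (MOPS) for $\mu$, $\|f\|_\mu^2=\int f^2d\mu$. $\{Q_n^c\}$ is the MOPS for $\langle f,g\rangle_\nu=\int fg\frac{1}{x-c}d\mu$, $\|f\|_\nu^2=\langle f,f\rangle_\nu$, and $K_n^c(x,y)=\sum_{k=0}^n\frac{Q_k^c(x)Q_k^c(y)}{\|Q_k^c\|_\nu^2}$. $\{Q_n^{c,N}\}$ is the MOPS for $\langle f,g\rangle_{\nu_N}=\int fg\frac{1}{x-c}d\mu+Nf(c)g(c)$. $B_n^c=\frac{-Q_n^c(c)P_{n-1}(c)}{\|P_{n-1}\|_\mu^2}$. *)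

(* Defs.v *)
From HB Require Import structures.
From mathcomp Require Import all_boot all_order all_algebra.
From mathcomp Require Import all_classical all_reals all_analysis.
Set Implicit Arguments. Unset Strict Implicit. Unset Printing Implicit Defensive.
Import Order.TTheory GRing.Theory Num.Theory.
Import numFieldNormedType.Exports.
Local Open Scope classical_set_scope.
Local Open Scope ring_scope.

Definition msupp (R : realType) (mu : {measure set (measurableTypeR R) -> \bar R})
  : set R := [set x | forall e : R, 0 < e -> (0 < mu (ball x e))%E].

Definition ip_mu (R : realType) (mu : {measure set (measurableTypeR R) -> \bar R})
  (p q : {poly R}) : R := Rintegral mu setT (fun x => p.[x] * q.[x]).

Definition ip_nu (R : realType) (mu : {measure set (measurableTypeR R) -> \bar R})
  (c : R) (p q : {poly R}) : R :=
  Rintegral mu setT (fun x => p.[x] * q.[x] / (x - c)).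

Definition ip_nuN (R : realType) (mu : {measure set (measurableTypeR R) -> \bar R})
  (c N : R) (p q : {poly R}) : R :=
  ip_nu mu c p q + N * p.[c] * q.[c].

Definition is_MOPS (R : realType) (B : {poly R} -> {poly R} -> R)
  (P : nat -> {poly R}) : Prop :=
  (forall n, size (P n) = n.+1 /\ lead_coef (P n) = 1) /\
  (forall m n, m <> n -> B (P m) (P n) = 0) /\
  (forall n, B (P n) (P n) != 0).

Definition Kc (R : realType) (mu : {measure set (measurableTypeR R) -> \bar R})
  (c : R) (Q : nat -> {poly R}) (n : nat) (x y : R) : R :=
  \sum_(0 <= k < n.+1) (Q k).[x] * (Q k).[y] / ip_nu mu c (Q k) (Q k).

Definition Bc (R : realType) (mu : {measure set (measurableTypeR R) -> \bar R})
  (c : R) (P Q : nat -> {poly R}) (n : nat) : R :=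
  - (Q n).[c] * (P n.-1).[c] / ip_mu mu (P n.-1) (P n.-1).

(* Main.v *)
Require Import Defs.
From HB Require Import structures.
From mathcomp Require Import all_boot all_order all_algebra.
From mathcomp Require Import all_classical all_reals all_analysis.
From mathcomp Require Import measurable_realfun.
From mathcomp Require Import ring lra.
Import Order.TTheory GRing.Theory Num.Theory.
Import numFieldNormedType.Exports.
Local Open Scope classical_set_scope.
Local Open Scope ring_scope.

Section algebra.
Variable R : realType.
Variable B : {poly R} -> {poly R} -> R.
Hypothesis BDl : forall p q r, B (p + q) r = B p r + B q r.
Hypothesis BZl : forall a p r, B (a *: p) r = a * B p r.
Hypothesis Bsym : forall p q, B p q = B q p.
Variable P : nat -> {poly R}.
Hypothesis hP : is_MOPS B P.

Lemma B0l p : B 0 p = 0.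
Proof. by rewrite -(scale0r (0 : {poly R})) BZl mul0r. Qed.

Lemma Bsuml (I : Type) (s : seq I) (F : I -> {poly R}) r :
  B (\sum_(i <- s) F i) r = \sum_(i <- s) B (F i) r.
Proof.
elim: s => [|i s IH]; first by rewrite !big_nil B0l.
by rewrite !big_cons BDl IH.
Qed.

Lemma BNl p r : B (- p) r = - B p r.
Proof. by rewrite -scaleN1r BZl mulN1r. Qed.

Lemma BBl p q r : B (p - q) r = B p r - B q r.
Proof. by rewrite BDl BNl. Qed.

Lemma expand n (f : {poly R}) : (size f <= n)%N ->
  f = \sum_(k < n) (B f (P k) / B (P k) (P k)) *: P k.
Proof.
case: hP => hs [ho hn].
elim: n f => [|n IH] f hf.
  by rewrite big_ord0; apply/eqP; rewrite -size_poly_eq0 -leqn0.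
set g := f - f`_n *: P n.
have [hsn hln] := hs n.
have hg : (size g <= n)%N.
  apply/leq_sizeP => j hj; rewrite /g coefB coefZ.
  move: hj; rewrite leq_eqVlt => /orP[/eqP <-|hnj].
    by move: hln; rewrite lead_coefE hsn /= => ->; rewrite mulr1 subrr.
  by rewrite (leq_sizeP _ _ hf j hnj) (elimT (leq_sizeP (P n) n.+1) (eq_leq hsn) j hnj) mulr0 subr0.
have Hk : forall k, (k < n)%N -> B g (P k) = B f (P k).
  move=> k hk; rewrite /g BBl BZl (ho n k) ?mulr0 ?subr0 //.
  by move=> e; rewrite e ltnn in hk.
have Hn : B f (P n) = f`_n * B (P n) (P n).
  have ef : f = g + f`_n *: P n by rewrite /g subrK.
  rewrite {1}ef BDl BZl {1}(IH g hg) Bsuml big1 ?add0r //.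
  move=> k _; rewrite BZl (ho k n) ?mulr0 //.
  by move=> e; have := ltn_ord k; rewrite e ltnn.
rewrite big_ord_recr /= Hn mulfK //.
have -> : \sum_(i < n) (B f (P (widen_ord (leqnSn n) i)) /
      B (P (widen_ord (leqnSn n) i)) (P (widen_ord (leqnSn n) i))) *:
    P (widen_ord (leqnSn n) i) = g.
  rewrite [RHS](IH g hg); apply: eq_bigr => k _ /=.
  by rewrite Hk.
by rewrite /g subrK.
Qed.

Lemma orth n (f : {poly R}) : (size f <= n)%N -> B f (P n) = 0.
Proof.
case: (hP) => _ [ho _].
move=> hf; rewrite (@expand n f hf) Bsuml big1 // => k _.
rewrite BZl (ho k n) ?mulr0 //.
by move=> e; have := ltn_ord k; rewrite e ltnn.
Qed.

End algebra.

Section ana.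
Variable R : realType.
Variable mu : {measure set (measurableTypeR R) -> \bar R}.
Variable c : R.
Hypothesis hm : forall k : nat, mu.-integrable setT (fun x : R => (x ^+ k)%:E).
Hypothesis hc : ~ msupp mu c.

Lemma poly_int (r : {poly R}) : mu.-integrable setT (fun x => (r.[x])%:E).
Proof.
have -> : (fun x => (r.[x])%:E) = (fun x => \sum_(i < size r) (r`_i * x ^+ i)%:E)%E.
  by apply/funext => x; rewrite horner_coef sumEFin.
apply: integrable_sum => // i _.
apply: eq_integrable (integrableZl _ (r`_i) (hm i)) => //.
Qed.

Lemma poly_meas (r : {poly R}) : measurable_fun setT (fun x : R => r.[x]).
Proof. by apply/measurable_EFinP; exact: (measurable_int mu (poly_int r)). Qed.

Lemma inv_meas : measurable_fun setT (fun x : R => (x - c)^-1).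
Proof.
have -> : [set: R] = ~` [set c] `|` [set c] by rewrite setvU.
apply/measurable_funU => //.
  by apply: measurableC.
split; last exact: measurable_fun_set1.
apply: open_continuous_measurable_fun.
  apply: closed_openC; apply: accessible_closed_set1.
  exact/hausdorff_accessible/Rhausdorff.
move=> x; rewrite inE /= => /eqP hx.
apply: (@continuousV R R (fun x0 : R => x0 - c) x); first by rewrite subr_eq0.
apply: continuousB => //; exact: cst_continuous.
Qed.

Lemma null_ball : exists e : R, 0 < e /\ mu (ball c e) = 0%E.
Proof.
have [e he] : exists e : R, ~ (0 < e -> (0 < mu (ball c e))%E).
  by apply/existsNP.
move/not_implyP: he => [e0 he]; exists e; split => //.
apply/eqP; rewrite eq_le measure_ge0 andbT.
by rewrite leNgt; apply/negP.
Qed.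

Lemma nu_int (r : {poly R}) :
  mu.-integrable setT (fun x => (r.[x] / (x - c))%:E).
Proof.
have [e [e0 mu0]] := null_ball.
have mf : measurable_fun setT (fun x => (r.[x] / (x - c))%:E).
  apply/measurable_EFinP; apply: measurable_funM; [exact: poly_meas|exact: inv_meas].
have := @negligible_integrable _ _ R mu setT (ball c e) _ (measurable_ball c e) measurableT mf mu0.
move=> [_ ->] //.
have mD : measurable (setT `\` ball c e : set R).
  by apply: measurableD => //; exact: measurable_ball.
apply: (@le_integrable _ _ _ mu _ mD _ (fun x => (e^-1 * r.[x])%:E)).
- by apply: measurable_funS mf.
- move=> x [_ nb]; rewrite !abse_EFin lee_fin normrM normfV [X in _ <= X]normrM.
  have hd : e <= `|x - c|.
    rewrite leNgt; apply/negP => hlt; apply: nb.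
    by rewrite /ball /= distrC.
  have hd0 : 0 < `|x - c| by apply: lt_le_trans hd.
  rewrite [`|e^-1|]gtr0_norm ?invr_gt0 // [X in _ <= X]mulrC ler_wpM2l //.
  by rewrite lef_pV2 ?posrE.
- apply: (integrableS _ _ _ (integrableZl measurableT (e^-1) (poly_int r))) => //.
Qed.


Lemma intM (p q : {poly R}) : mu.-integrable setT (EFin \o (fun x => p.[x] * q.[x])).
Proof. by apply: eq_integrable (poly_int (p * q)) => // x _; rewrite /= hornerM. Qed.

Lemma intMnu (p q : {poly R}) :
  mu.-integrable setT (EFin \o (fun x => p.[x] * q.[x] / (x - c))).
Proof. by apply: eq_integrable (nu_int (p * q)) => // x _; rewrite /= hornerM. Qed.

Lemma ip_mu_Dl p q r : ip_mu mu (p + q) r = ip_mu mu p r + ip_mu mu q r.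
Proof.
rewrite /ip_mu -RintegralD //; [|exact: intM|exact: intM].
by apply: eq_Rintegral => x _; rewrite hornerD mulrDl.
Qed.

Lemma ip_mu_Zl a p r : ip_mu mu (a *: p) r = a * ip_mu mu p r.
Proof.
rewrite /ip_mu -RintegralZl //; last exact: intM.
by apply: eq_Rintegral => x _; rewrite hornerZ mulrA.
Qed.

Lemma ip_mu_sym p q : ip_mu mu p q = ip_mu mu q p.
Proof. by rewrite /ip_mu; apply: eq_Rintegral => x _; rewrite mulrC. Qed.

Lemma ip_nu_Dl p q r : ip_nu mu c (p + q) r = ip_nu mu c p r + ip_nu mu c q r.
Proof.
rewrite /ip_nu -RintegralD //; [|exact: intMnu|exact: intMnu].
by apply: eq_Rintegral => x _; rewrite hornerD mulrDl mulrDl.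
Qed.

Lemma ip_nu_Zl a p r : ip_nu mu c (a *: p) r = a * ip_nu mu c p r.
Proof.
rewrite /ip_nu -RintegralZl //; last exact: intMnu.
by apply: eq_Rintegral => x _; rewrite hornerZ !mulrA.
Qed.

Lemma ip_nu_sym p q : ip_nu mu c p q = ip_nu mu c q p.
Proof. by rewrite /ip_nu; apply: eq_Rintegral => x _; rewrite (mulrC p.[x]). Qed.

Lemma ip_F2 p q : ip_nu mu c (('X - c%:P) * p) q = ip_mu mu p q.
Proof.
rewrite /ip_nu /ip_mu /Rintegral; congr fine.
have [e [e0 mu0]] := null_ball.
have i1 := intMnu (('X - c%:P) * p) q.
have i2 := intM p q.
rewrite (@negligible_integral _ _ R mu setT (ball c e) _ (measurable_ball c e) measurableT i1 mu0).
rewrite (@negligible_integral _ _ R mu setT (ball c e) _ (measurable_ball c e) measurableT i2 mu0).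
apply: eq_integral => x; rewrite inE => -[_ nb]; congr EFin.
have hx : x - c != 0.
  by rewrite subr_eq0; apply/eqP => exc; apply: nb; rewrite exc; exact: ballxx.
rewrite hornerM hornerXsubC; field.
by [].
Qed.

End ana.

Lemma monic_sub_size (R : realType) (p q : {poly R}) n :
  size p = n.+1 -> lead_coef p = 1 -> size q = n.+1 -> lead_coef q = 1 ->
  (size (p - q)%R <= n)%N.
Proof.
move=> sp lp sq lq; apply/leq_sizeP => j hj; rewrite coefB.
move: hj; rewrite leq_eqVlt => /orP[/eqP <-|hnj].
  by move: lp lq; rewrite !lead_coefE sp sq /= => -> ->; rewrite subrr.
by rewrite (elimT (leq_sizeP p n.+1) (eq_leq sp) j hnj)
  (elimT (leq_sizeP q n.+1) (eq_leq sq) j hnj) subrr.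
Qed.

Lemma size_span (R : realType) n (a : nat -> R) (Q : nat -> {poly R}) :
  (forall k, size (Q k) = k.+1) ->
  (size (\sum_(k < n) a k *: Q k)%R <= n)%N.
Proof.
move=> hs; elim: n => [|n IH]; first by rewrite big_ord0 size_poly0.
rewrite big_ord_recr /=; apply: leq_trans (size_polyD _ _) _.
rewrite geq_max (leq_trans IH) //=.
by apply: leq_trans (size_scale_leq _ _) _; rewrite hs.
Qed.

Section main.
Variable R : realType.
Variables B1 B2 : {poly R} -> {poly R} -> R.
Variables c N : R.
Hypothesis B1Dl : forall p q r, B1 (p + q) r = B1 p r + B1 q r.
Hypothesis B1Zl : forall a p r, B1 (a *: p) r = a * B1 p r.
Hypothesis B1sym : forall p q, B1 p q = B1 q p.
Hypothesis B2Dl : forall p q r, B2 (p + q) r = B2 p r + B2 q r.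
Hypothesis B2Zl : forall a p r, B2 (a *: p) r = a * B2 p r.
Hypothesis B2sym : forall p q, B2 p q = B2 q p.
Hypothesis F2 : forall p q, B2 (('X - c%:P) * p) q = B1 p q.
Let B3 := fun p q => B2 p q + N * p.[c] * q.[c].
Lemma B3Dl p q r : B3 (p + q) r = B3 p r + B3 q r.
Proof. rewrite /B3 B2Dl hornerD; ring. Qed.
Lemma B3Zl a p r : B3 (a *: p) r = a * B3 p r.
Proof. rewrite /B3 B2Zl hornerZ; ring. Qed.
Lemma B3sym p q : B3 p q = B3 q p.
Proof. rewrite /B3 B2sym; ring. Qed.

Variables P Q QN : nat -> {poly R}.
Hypothesis hP : is_MOPS B1 P.
Hypothesis hQ : is_MOPS B2 Q.
Hypothesis hQN : is_MOPS B3 QN.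

Variable n : nat.
Hypothesis hn : (1 <= n)%N.
Let K := \sum_(k < n) ((Q k).[c] / B2 (Q k) (Q k)) *: Q k.

Lemma B2KQ j : (j < n)%N -> B2 K (Q j) = (Q j).[c].
Proof.
case: hQ => _ [ho hnz] hj.
rewrite /K (@Bsuml _ B2 B2Dl B2Zl) (bigD1 (Ordinal hj)) //= big1 ?addr0.
  by rewrite B2Zl divfK.
move=> k /eqP hk; rewrite B2Zl (ho k j) ?mulr0 // => e; apply: hk.
by apply: val_inj.
Qed.

Lemma sizeK : (size K <= n)%N.
Proof. by apply: (@size_span _ n (fun k => (Q k).[c] / B2 (Q k) (Q k)) Q) => k; case: (hQ) => hs _; case: (hs k). Qed.

Lemma claim1 : QN n = Q n - (N * (QN n).[c]) *: K.
Proof.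
have [hsQ [hoQ hnQ]] := hQ.
have [hsN [hoN hnN]] := hQN.
have hD : (size (QN n - Q n)%R <= n)%N.
  have [a b] := hsN n; have [a' b'] := hsQ n.
  exact: monic_sub_size.
have eD := @expand _ B2 B2Dl B2Zl Q hQ n _ hD.
have coef k : (k < n)%N -> B2 (QN n - Q n) (Q k) = - (N * (QN n).[c] * (Q k).[c]).
  move=> hk.
  rewrite (@BBl _ B2 B2Dl B2Zl) (hoQ n k); last first.
    by move=> e; rewrite e ltnn in hk.
  have h3 : B3 (QN n) (Q k) = 0.
    rewrite B3sym (@orth _ B3 B3Dl B3Zl QN hQN n (Q k)) //.
    by have [-> _] := hsQ k.
  move: h3; rewrite /B3 => /eqP; rewrite addr_eq0 => /eqP ->; ring.
have h : QN n - Q n = - ((N * (QN n).[c]) *: K).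
  rewrite eD /K scaler_sumr -sumrN; apply: eq_bigr => k _.
  have e : - (N * (QN n).[c] * (Q k).[c]) / B2 (Q k) (Q k) =
    - (N * (QN n).[c] * ((Q k).[c] / B2 (Q k) (Q k))) by ring.
  by rewrite coef // e scaleNr scalerA.
by rewrite -h addrC subrK.
Qed.

Lemma K_ne : 1 + N * K.[c] != 0.
Proof.
apply/negP => /eqP h.
have hsQ := hQ.1.
have hs3 (g : {poly R}) : (size g <= n)%N -> B3 K g = 0.
  move=> hg; rewrite B3sym {1}(@expand _ B2 B2Dl B2Zl Q hQ n g hg).
  rewrite (@Bsuml _ B3 B3Dl B3Zl) big1 // => j _.
  rewrite B3Zl /B3 (B2sym (Q j) K) B2KQ //.
  have -> : (Q j).[c] + N * (Q j).[c] * K.[c] = (Q j).[c] * (1 + N * K.[c]) by ring.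
  by rewrite h !mulr0.
have K0 : K = 0.
  rewrite (@expand _ B3 B3Dl B3Zl QN hQN n K sizeK) big1 // => k _.
  rewrite hs3 ?mul0r ?scale0r //.
  by have [-> _] := hQN.1 k.
by move: h; rewrite K0 horner0 mulr0 addr0 => /eqP; rewrite oner_eq0.
Qed.

Lemma claimK : K.[c] = - (Q n).[c] * (P n.-1).[c] / B1 (P n.-1) (P n.-1).
Proof.
set m := n.-1.
have hnm : n = m.+1 by rewrite /m prednK.
have [hsP [hoP hnP]] := hP.
have [hsQ [hoQ hnQ]] := hQ.
have hszPm : (size (P m) <= n)%N by rewrite (hsP m).1 hnm.
have hB2P : B2 (P m) K = (P m).[c].
  have e := @expand _ B2 B2Dl B2Zl Q hQ n (P m) hszPm.
  rewrite {1}e [in RHS]e (@Bsuml _ B2 B2Dl B2Zl) horner_sum.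
  by apply: eq_bigr => k _; rewrite B2Zl (B2sym (Q k) K) B2KQ // hornerZ.
have [r hr] : exists r, K - K.[c]%:P = r * ('X - c%:P).
  by apply/factor_theorem; rewrite /root hornerD hornerN hornerC subrr.
have hsr : (size r <= m)%N.
  have [->|rn0] := eqVneq r 0; first by rewrite size_poly0.
  have := size_polyD K (- K.[c]%:P).
  rewrite hr size_Mmonic ?monicXsubC // size_XsubC addn2 /= size_polyN.
  move=> h1; have : (size r < n)%N.
    apply: leq_trans h1 _.
    by rewrite geq_max sizeK /= (leq_trans (size_polyC_leq1 _)).
  by rewrite hnm ltnS.
have eK : K = K.[c] *: 1 + ('X - c%:P) * r.
  by rewrite mulrC -hr -alg_polyC /= addrC subrK.
set a := B2 1 (P m).
have h1 : (P m).[c] = K.[c] * a.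
  rewrite -hB2P B2sym {1}eK B2Dl B2Zl F2 (@orth _ B1 B1Dl B1Zl P hP m r hsr).
  by rewrite addr0.
have [s hs] : exists s, Q n - (Q n).[c]%:P = s * ('X - c%:P).
  by apply/factor_theorem; rewrite /root hornerD hornerN hornerC subrr.
have [sQn lQn] := hsQ n.
have hlt : (size (- (Q n).[c]%:P) < size (Q n))%N.
  by rewrite size_polyN sQn ltnS (leq_trans (size_polyC_leq1 _)).
have sD : size (Q n - (Q n).[c]%:P) = n.+1 by rewrite size_polyDl.
have lD : lead_coef (Q n - (Q n).[c]%:P) = 1 by rewrite lead_coefDl.
have s0 : s != 0.
  by apply/eqP => s0; move: sD; rewrite hs s0 mul0r size_poly0.
have ss : size s = m.+1.
  move: sD; rewrite hs size_Mmonic ?monicXsubC // size_XsubC addn2 /=.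
  by move=> [->].
have ls : lead_coef s = 1.
  by move: lD; rewrite hs lead_coef_Mmonic ?monicXsubC.
have hsub := @monic_sub_size _ _ _ _ ss ls (hsP m).1 (hsP m).2.
have hB1s : B1 s (P m) = B1 (P m) (P m).
  have := @orth _ B1 B1Dl B1Zl P hP m _ hsub.
  by rewrite (@BBl _ B1 B1Dl B1Zl) => /eqP; rewrite subr_eq0 => /eqP.
have eQ : Q n = (Q n).[c] *: 1 + ('X - c%:P) * s.
  by rewrite mulrC -hs -alg_polyC /= addrC subrK.
have h2 : (Q n).[c] * a = - B1 (P m) (P m).
  have := @orth _ B2 B2Dl B2Zl Q hQ n (P m) hszPm.
  rewrite B2sym {1}eQ B2Dl B2Zl F2 hB1s => /eqP; rewrite addr_eq0 => /eqP.
  by [].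
rewrite h1.
have -> : - (Q n).[c] * (K.[c] * a) / B1 (P m) (P m) =
  K.[c] * (- ((Q n).[c] * a) / B1 (P m) (P m)) by ring.
by rewrite h2 opprK divff // mulr1.
Qed.


Lemma main_alg :
  (forall x, (QN n).[x] = (Q n).[x] - N * (QN n).[c] * K.[x]) /\
  (QN n).[c] = (Q n).[c] / (1 + N * K.[c]) /\
  (QN n).[c] = (1 + N * (- (Q n).[c] * (P n.-1).[c] / B1 (P n.-1) (P n.-1)))^-1
     * (Q n).[c].
Proof.
have e1 x : (QN n).[x] = (Q n).[x] - N * (QN n).[c] * K.[x].
  by rewrite {1}claim1 hornerD hornerN hornerZ.
have e2 : (QN n).[c] = (Q n).[c] / (1 + N * K.[c]).
  have h := e1 c.
  have h2 : (QN n).[c] * (1 + N * K.[c]) = (Q n).[c].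
    by rewrite mulrDr mulr1 {1}h; ring.
  by rewrite -h2 mulfK // K_ne.
split => //; split => //.
by rewrite -claimK mulrC.
Qed.
End main.

Lemma Kc_eq (R : realType) (mu : {measure set (measurableTypeR R) -> \bar R})
  (c : R) (Q : nat -> {poly R}) n x : (1 <= n)%N ->
  Kc mu c Q n.-1 x c =
  (\sum_(k < n) ((Q k).[c] / ip_nu mu c (Q k) (Q k)) *: Q k).[x].
Proof.
move=> hn; rewrite /Kc prednK // big_mkord horner_sum.
by apply: eq_bigr => k _; rewrite hornerZ; ring.
Qed.

Theorem lemma1 (R : realType) (mu : {measure set (measurableTypeR R) -> \bar R})
  (c N : R) (P Q QN : nat -> {poly R}) :
  mu `<< (@lebesgue_measure R) ->
  (forall k : nat, mu.-integrable setT (fun x : R => (x ^+ k)%:E)) ->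
  ~ finite_set (msupp mu) ->
  ~ msupp mu c ->
  0 < N ->
  is_MOPS (ip_mu mu) P ->
  is_MOPS (ip_nu mu c) Q ->
  is_MOPS (ip_nuN mu c N) QN ->
  forall n : nat, (1 <= n)%N ->
    (forall x : R,
      (QN n).[x] = (Q n).[x] - N * (QN n).[c] * Kc mu c Q n.-1 x c) /\
    (QN n).[c] = (Q n).[c] / (1 + N * Kc mu c Q n.-1 c c) /\
    (QN n).[c] = (1 + N * Bc mu c P Q n)^-1 * (Q n).[c].
Proof.
move=> hac hm hinf hc hN hP hQ hQN n hn.
have H := @main_alg R (ip_mu mu) (ip_nu mu c) c N (@ip_mu_Dl R mu hm)
  (@ip_mu_Zl R mu hm) (@ip_nu_Dl R mu c hm hc) (@ip_nu_Zl R mu c hm hc)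
  (@ip_nu_sym R mu c) (@ip_F2 R mu c hm hc) P Q QN hP hQ hQN n hn.
case: H => [h1 [h2 h3]]; split.
  by move=> x; rewrite Kc_eq //; exact: h1.
by split; [rewrite Kc_eq // | exact: h3].
Qed.
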